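(* Let $f:\mathcal{S}\to\mathbb{R}$ be continuously differentiable with $f^{\inf}:=\inf_{X\in\mathcal{S}}f(X)>-\infty$, and suppose $f$ is layer-wise $(L^0,L^1)$-smooth with constants $L^0,L^1\in\mathbb{R}^p_+$. Fix $\varepsilon>0$ and let $X^0,X^1,\dots$ be the iterates of deterministic Gluon with radii $$t_i^k=\frac{\|\nabla_i f(X^k)\|_{(i)\star}}{L^0_i+L^1_i\|\nabla_i f(X^k)\|_{(i)\star}},$$ assumed well defined, i.e. $L^0_i+L^1_i\|\nabla_i f(X^k)\|_{(i)\star}>0$ whenever $\nabla_i f(X^k)\neq0$, and with $t_i^k:=0$ (so $X_i^{k+1}=X_i^k$) when $\nabla_i f(X^k)=0$. Let $\Delta^0:=f(X^0)-f^{\inf}$ and $L^1_{\max}:=\max_i L^1_i$. Then: (1) With $K:=\left\lceil \frac{2\Delta^0\sum_{i=1}^pL^0_i}{\varepsilon^2}+\frac{2\Delta^0L^1_{\max}}{\varepsilon}\right\rceil$ (provided $K\ge1$), $\min_{k=0,\dots,K-1}\sum_{i=1}^p\|\nabla_i f(X^k)\|_{(i)\star}\le\varepsilon$. (2) If moreover $L^1_i>0$ for all $i$, set $H:=\frac1p\sum_{j=1}^p\frac{1}{L^1_j}$ and $K:=\left\lceil \frac{2\Delta^0\sum_{i=1}^p \frac{L^0_i}{(L^1_i)^2}}{\varepsilon^2H^2}+\frac{2\Delta^0}{\varepsilon H}\right\rceil$; then (provided $K\ge1$) $\min_{k=0,\dots,K-1}\sum_{i=1}^p\frac{1/L^1_i}{H}\|\nabla_i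 f(X^k)\|_{(i)\star}\le\varepsilon$.
   Context: $\mathcal{S}=\mathcal{S}_1\times\cdots\times\mathcal{S}_p$ with $\mathcal{S}_i=\mathbb{R}^{m_i\times n_i}$; an element is written $X=[X_1,\dots,X_p]$. Each $\mathcal{S}_i$ carries the trace inner product $\langle X_i,Y_i\rangle_{(i)}=\operatorname{tr}(X_i^\top Y_i)$ and an arbitrary norm $\|\cdot\|_{(i)}$ with dual norm $\|Y_i\|_{(i)\star}=\sup_{\|Z_i\|_{(i)}\le 1}\langle Y_i,Z_i\rangle_{(i)}$. $\nabla_i f(X)\in\mathcal{S}_i$ denotes the block of the gradient of $f$ corresponding to $X_i$. Layer-wise $(L^0,L^1)$-smoothness: for all $i$ and all $X,Y\in\mathcal{S}$, $\|\nabla_i f(X)-\nabla_i f(Y)\|_{(i)\star}\le (L^0_i+L^1_i\|\nabla_i f(X)\|_{(i)\star})\|X_i-Y_i\|_{(i)}$. Deterministic Gluon: for $k=0,1,\dots$ and each $i$, given radius $t_i^k\ge0$, set $X_i^{k+1}\in\arg\min\{\langle \nabla_i f(X^k),X_i\rangle_{(i)}: \|X_i-X_i^k\|_{(i)}\le t_i^k\}$ (any minimizer) and $X^{k+1}=[X_1^{k+1},\dots,X_p^{k+1}]$. *)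

(* Defs.v *)
From HB Require Import structures.
From mathcomp Require Import all_boot all_order all_algebra.
From mathcomp Require Import classical_sets boolp reals.
Set Implicit Arguments. Unset Strict Implicit. Unset Printing Implicit Defensive.
Import Order.TTheory GRing.Theory Num.Theory.
Local Open Scope ring_scope.
Local Open Scope classical_set_scope.

Definition pspace (R : realType) (p : nat) (m n : 'I_p -> nat) :=
  forall i : 'I_p, 'M[R]_(m i, n i).

Definition ip (R : realType) (a b : nat) (A B : 'M[R]_(a, b)) : R :=
  \tr (A^T *m B).

Definition is_norm (R : realType) (a b : nat) (N : 'M[R]_(a, b) -> R) : Prop :=
  [/\ (forall A, 0 <= N A),
      (forall A, N A = 0 -> A = 0),
      (forall (c : R) A, N (c *: A) = `|c| * N A) &
      (forall A B, N (A + B) <= N A + N B)].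

Definition dual_norm (R : realType) (a b : nat) (N : 'M[R]_(a, b) -> R)
  (Y : 'M[R]_(a, b)) : R :=
  sup [set ip Y Z | Z in [set Z | N Z <= 1]].

(* A fixed reference norm on S (entrywise l1); all norms on the
   finite-dimensional space S are equivalent, so differentiability and
   continuity do not depend on this choice. *)
Definition snorm (R : realType) p (m n : 'I_p -> nat) (X : pspace R m n) : R :=
  \sum_(i < p) \sum_(a < m i) \sum_(b < n i) `|X i a b|.

Definition sadd (R : realType) p (m n : 'I_p -> nat) (X Y : pspace R m n)
  : pspace R m n := fun i => X i + Y i.

Definition ssub (R : realType) p (m n : 'I_p -> nat) (X Y : pspace R m n)
  : pspace R m n := fun i => X i - Y i.

Definition sip (R : realType) p (m n : 'I_p -> nat) (X Y : pspace R m n) : R :=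
  \sum_(i < p) ip (X i) (Y i).

Definition is_gradient (R : realType) p (m n : 'I_p -> nat)
  (f : pspace R m n -> R) (G : pspace R m n -> pspace R m n) : Prop :=
  forall X : pspace R m n, forall eps : R, 0 < eps ->
    exists2 delta : R, 0 < delta &
      forall H : pspace R m n, snorm H < delta ->
        `|f (sadd X H) - f X - sip (G X) H| <= eps * snorm H.

Definition scontinuous (R : realType) p (m n : 'I_p -> nat)
  (G : pspace R m n -> pspace R m n) : Prop :=
  forall X : pspace R m n, forall eps : R, 0 < eps ->
    exists2 delta : R, 0 < delta &
      forall Y : pspace R m n, snorm (ssub Y X) < delta ->
        snorm (ssub (G Y) (G X)) < eps.

Definition C1_with_gradient (R : realType) p (m n : 'I_p -> nat)
  (f : pspace R m n -> R) (G : pspace R m n -> pspace R m n) : Prop :=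
  is_gradient f G /\ scontinuous G.

Definition layerwise_L0L1_smooth (R : realType) p (m n : 'I_p -> nat)
  (N : forall i : 'I_p, 'M[R]_(m i, n i) -> R)
  (G : pspace R m n -> pspace R m n) (L0 L1 : 'I_p -> R) : Prop :=
  forall (i : 'I_p) (X Y : pspace R m n),
    dual_norm (N i) (G X i - G Y i)
      <= (L0 i + L1 i * dual_norm (N i) (G X i)) * N i (X i - Y i).

Definition gluon_radius (R : realType) (a b : nat) (N : 'M[R]_(a, b) -> R)
  (l0 l1 : R) (g : 'M[R]_(a, b)) : R :=
  if g == 0 then 0
  else dual_norm N g / (l0 + l1 * dual_norm N g).

Definition gluon_iterates (R : realType) p (m n : 'I_p -> nat)
  (N : forall i : 'I_p, 'M[R]_(m i, n i) -> R)
  (G : pspace R m n -> pspace R m n) (t : nat -> 'I_p -> R)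
  (X : nat -> pspace R m n) : Prop :=
  forall (k : nat) (i : 'I_p),
    N i (X k.+1 i - X k i) <= t k i /\
    forall Z : 'M[R]_(m i, n i), N i (Z - X k i) <= t k i ->
      ip (G (X k) i) (X k.+1 i) <= ip (G (X k) i) Z.

(* Main.v *)
Require Import Defs.
From HB Require Import structures.
From mathcomp Require Import all_boot all_order all_algebra.
From mathcomp Require Import classical_sets boolp reals.
From mathcomp Require Import functions topology normedtype derive.
From mathcomp Require Import ring lra.
Set Implicit Arguments. Unset Strict Implicit. Unset Printing Implicit Defensive.
Import Order.TTheory GRing.Theory Num.Theory.
Import numFieldNormedType.Exports.
Local Open Scope ring_scope.
Local Open Scope classical_set_scope.

Section A.
Variable R : realType.

Lemma sub_big (a b : nat) (N : 'M[R]_(a,b) -> R) (I : finType) (F : I -> 'M[R]_(a,b)) :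
  N 0 = 0 -> (forall A B, N (A + B) <= N A + N B) ->
  N (\sum_i F i) <= \sum_i N (F i).
Proof.
move=> N0 Nadd.
elim/big_rec2: _ => [|i y1 y2 _ H]; first by rewrite N0.
by apply: le_trans (Nadd _ _) _; rewrite lerD2l.
Qed.

Lemma norm0 (a b : nat) (N : 'M[R]_(a,b) -> R) : is_norm N -> N 0 = 0.
Proof. by case=> _ _ NZ _; rewrite -(scale0r 0) NZ normr0 mul0r. Qed.

Lemma normN (a b : nat) (N : 'M[R]_(a,b) -> R) A : is_norm N -> N (- A) = N A.
Proof. by case=> _ _ NZ _; rewrite -scaleN1r NZ normrN normr1 mul1r. Qed.

Lemma rV_entry_le k (v : 'rV[R]_k) j : `|v 0 j| <= `|v|.
Proof.
change (`|v 0 j| <= mx_norm v); rewrite mx_normrE.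
by apply/bigmax_geP; right; exists (0, j).
Qed.

Lemma rV_norm_lb k (N : 'rV[R]_k -> R) : is_norm N ->
  exists2 c, 0 < c & forall v, c * `|v| <= N v.
Proof.
move=> Nn; have N0 := norm0 Nn; have [Nge0 Neq0 NZ Nadd] := Nn.
pose M := \sum_j N (delta_mx 0 j).
have Nup v : N v <= M * `|v|.
  rewrite {1}(row_sum_delta v); apply: le_trans (sub_big _ N0 Nadd) _.
  rewrite /M mulr_suml; apply: ler_sum => j _; rewrite NZ mulrC.
  by apply: ler_wpM2l => //; apply: rV_entry_le.
have Mge0 : 0 <= M by apply: sumr_ge0 => j _.
have contN : continuous N.
  move=> x; apply/(@cvgrPdist_le _ _ _ (nbhs x) (nbhs_filter x)) => e e0.
  apply: (proj2 (@nbhs_normP R _ x _)); exists (e / (M + 1)) => /=.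
    by apply: divr_gt0 => //; rewrite ltr_wpDl.
  move=> y; rewrite /ball_ /= => xy.
  have H1 : N x <= N (x - y) + N y by rewrite -{1}(subrK y x) Nadd.
  have H2 : N y <= N (y - x) + N x by rewrite -{1}(subrK x y) Nadd.
  have H3 : N (y - x) = N (x - y) by rewrite -opprB normN.
  have H4 : N (x - y) <= e.
    apply: le_trans (Nup _) _.
    have : `|x - y| * (M + 1) <= e by rewrite -ler_pdivlMr ?ltr_wpDl // ltW.
    move=> H; apply: le_trans H; have := normr_ge0 (x - y); nra.
  rewrite ler_norml; apply/andP; split; rewrite lerBDl ?lerBlDr; lra.
pose A := [set v : 'rV[R]_k | `|v| = 1].
have [[v0 Av0]|A0] := pselect (A !=set0); last first.
  exists 1 => // v; rewrite mul1r.
  have [->|vn0] := eqVneq v 0; first by rewrite normr0 N0.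
  exfalso; apply: A0; exists (`|v|^-1 *: v); rewrite /A /=.
  exact: normfZV.
have cA : compact A.
  apply: bounded_closed_compact.
    exists 1; split => // M1 M11 x /= ->; exact: ltW.
  have -> : A = (Num.norm : 'rV[R]_k -> R) @^-1` [set x | x = 1] by [].
  apply: preimage_closed; last exact: closed_eq.
  by move=> x _; apply: norm_continuous.
have [c Ac cmin] := compact_EVT_min (ex_intro _ v0 Av0) cA
   (continuous_subspaceT contN).
have cn0 : c != 0.
  by apply/eqP => c0; move: Ac; rewrite inE /A /= c0 normr0 => /esym/eqP; rewrite oner_eq0.
exists (N c).
  rewrite lt_def Nge0 andbT; apply/eqP => /Neq0 /eqP; exact/negP.
move=> v; have [->|vn0] := eqVneq v 0; first by rewrite normr0 mulr0 N0.
have := cmin (`|v|^-1 *: v); rewrite inE /A /= normfZV // => /(_ erefl).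
rewrite NZ normfV normr_id ler_pdivlMl ?normr_gt0 //.
by rewrite mulrC.
Qed.

Lemma mx_norm_lb (a b : nat) (N : 'M[R]_(a,b) -> R) : is_norm N ->
  exists2 c, 0 < c & forall (Z : 'M[R]_(a,b)) i j, c * `|Z i j| <= N Z.
Proof.
move=> [Nge0 Neq0 NZ Nadd].
pose N' (v : 'rV[R]_(a * b)) := N (vec_mx v).
have N'n : is_norm N'.
  split; rewrite /N'.
  - by move=> v.
  - by move=> v /Neq0 /eqP; rewrite vec_mx_eq0 => /eqP.
  - by move=> c v; rewrite linearZ NZ.
  - by move=> v w; rewrite linearD Nadd.
have [c c0 Hc] := rV_norm_lb N'n.
exists c => // Z i j.
have := Hc (mxvec Z); rewrite /N' mxvecK; apply: le_trans; rewrite -mxvecE; apply: ler_wpM2l; [exact: ltW | exact: rV_entry_le].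
Qed.

Lemma ipE (a b : nat) (Y Z : 'M[R]_(a,b)) :
  ip Y Z = \sum_i \sum_j Y i j * Z i j.
Proof.
rewrite /ip /mxtrace exchange_big /=; apply: eq_bigr => j _.
by rewrite !mxE; apply: eq_bigr => i _; rewrite mxE.
Qed.

Lemma ipZr (a b : nat) (Y Z : 'M[R]_(a,b)) c : ip Y (c *: Z) = c * ip Y Z.
Proof.
by rewrite !ipE mulr_sumr; apply: eq_bigr => i _; rewrite mulr_sumr;
  apply: eq_bigr => j _; rewrite mxE mulrCA.
Qed.

Lemma ipBl (a b : nat) (Y1 Y2 Z : 'M[R]_(a,b)) : ip (Y1 - Y2) Z = ip Y1 Z - ip Y2 Z.
Proof.
rewrite !ipE -sumrB; apply: eq_bigr => i _; rewrite -sumrB.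
by apply: eq_bigr => j _; rewrite !mxE mulrBl.
Qed.

Lemma ipNN (a b : nat) (Y Z : 'M[R]_(a,b)) : ip (- Y) (- Z) = ip Y Z.
Proof.
rewrite !ipE; apply: eq_bigr => i _; apply: eq_bigr => j _.
by rewrite !mxE mulrNN.
Qed.

Lemma ipDr (a b : nat) (Y Z1 Z2 : 'M[R]_(a,b)) : ip Y (Z1 + Z2) = ip Y Z1 + ip Y Z2.
Proof.
rewrite !ipE -big_split; apply: eq_bigr => i _; rewrite -big_split.
by apply: eq_bigr => j _; rewrite !mxE mulrDr.
Qed.

Lemma ip0r (a b : nat) (Y : 'M[R]_(a,b)) : ip Y 0 = 0.
Proof. by rewrite -(scale0r 0) ipZr mul0r. Qed.

Lemma ip0l (a b : nat) (Z : 'M[R]_(a,b)) : ip 0 Z = 0.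
Proof.
by rewrite ipE big1 // => i _; rewrite big1 // => j _; rewrite mxE mul0r.
Qed.

Lemma dual_has_sup (a b : nat) (N : 'M[R]_(a,b) -> R) Y : is_norm N ->
  has_sup [set ip Y Z | Z in [set Z | N Z <= 1]].
Proof.
move=> Nn; have [c c0 Hc] := mx_norm_lb Nn.
split.
  by exists 0, 0 => //=; [rewrite (norm0 Nn) | rewrite ip0r].
exists ((\sum_i \sum_j `|Y i j|) / c) => _ [Z /= NZ1 <-].
rewrite ipE mulr_suml; apply: ler_sum => i _; rewrite mulr_suml.
apply: ler_sum => j _.
apply: le_trans (ler_norm _) _; rewrite normrM ler_wpM2l //.
rewrite -(mul1r c^-1) ler_pdivlMr // mulrC; apply: le_trans (Hc Z i j) NZ1.
Qed.

Lemma ip_le_dual (a b : nat) (N : 'M[R]_(a,b) -> R) Y Z : is_norm N ->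
  ip Y Z <= dual_norm N Y * N Z.
Proof.
move=> Nn; have [Nge0 Neq0 NZ Nadd] := Nn.
have [/Neq0 ->|] := eqVneq (N Z) 0.
  by rewrite ip0r (norm0 Nn) mulr0.
move=> Nn0; have Np : 0 < N Z by rewrite lt_def Nn0 Nge0.
rewrite -ler_pdivrMr //.
have -> : ip Y Z / N Z = ip Y ((N Z)^-1 *: Z) by rewrite ipZr mulrC.
apply: sup_upper_bound; first exact: dual_has_sup.
exists ((N Z)^-1 *: Z) => //=.
rewrite NZ ger0_norm; [by rewrite mulVf | by rewrite invr_ge0 ltW].
Qed.

Lemma dual_ge0 (a b : nat) (N : 'M[R]_(a,b) -> R) Y : is_norm N ->
  0 <= dual_norm N Y.
Proof.
move=> Nn; apply: le_trans (sup_upper_bound (dual_has_sup Y Nn) _).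
  exact: lexx.
by exists 0; rewrite /= ?ip0r // (norm0 Nn).
Qed.

Lemma dual0 (a b : nat) (N : 'M[R]_(a,b) -> R) : is_norm N ->
  dual_norm N 0 = 0.
Proof.
move=> Nn; apply/le_anti; rewrite dual_ge0 // andbT.
apply: ge_sup.
  by exists 0, 0 => //=; [rewrite (norm0 Nn) | rewrite ip0r].
by move=> _ [Z _ <-]; rewrite ip0l.
Qed.

Lemma dual_le_ub (a b : nat) (N : 'M[R]_(a,b) -> R) Y u : is_norm N ->
  (forall Z, N Z <= 1 -> ip Y Z <= u) -> dual_norm N Y <= u.
Proof.
move=> Nn H; apply: ge_sup.
  by exists 0, 0 => //=; [rewrite (norm0 Nn) | rewrite ip0r].
by move=> _ [Z HZ <-]; apply: H.
Qed.
End A.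

Section B.
Variable R : realType.
Variables (p : nat) (m n : 'I_p -> nat).

Definition pline (X D : pspace R m n) (t : R) : pspace R m n :=
  fun i => X i + t *: D i.

Lemma snormZ (D : pspace R m n) (h : R) :
  snorm (fun i => h *: D i) = `|h| * snorm D.
Proof.
rewrite /snorm mulr_sumr; apply: eq_bigr => i _; rewrite mulr_sumr.
apply: eq_bigr => a _; rewrite mulr_sumr; apply: eq_bigr => b _.
by rewrite mxE normrM.
Qed.

Lemma sipZr (A D : pspace R m n) (h : R) :
  sip A (fun i => h *: D i) = h * sip A D.
Proof. by rewrite /sip mulr_sumr; apply: eq_bigr => i _; rewrite ipZr. Qed.

Lemma pline_add X D t h : sadd (pline X D t) (fun i => h *: D i) = pline X D (h + t).
Proof.
apply: functional_extensionality_dep => i.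
by rewrite /sadd /pline scalerDl [h *: D i + _]addrC addrA.
Qed.

Lemma line_derive (f : pspace R m n -> R) (G : pspace R m n -> pspace R m n) (X D : pspace R m n) (t : R) :
  is_gradient f G ->
  is_derive t (1:R) (fun s => f (pline X D s)) (sip (G (pline X D t)) D).
Proof.
move=> fG.
set s := sip _ D.
have snorm_ge0 : 0 <= snorm D.
  by apply: sumr_ge0 => i _; apply: sumr_ge0 => a _; apply: sumr_ge0.
have sD0 : 0 < snorm D + 1 by rewrite ltr_wpDl.
have Hc : (fun h => h^-1 *: (((fun s => f (pline X D s)) \o shift t) (h *: (1:R))
     - f (pline X D t))) @ 0^' --> s.
  apply/cvgrPdist_le => e e0.
  have [d d0 Hd] := fG (pline X D t) (e / (snorm D + 1)) (divr_gt0 e0 sD0).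
  rewrite near_withinE; apply/nbhs_normP; exists (d / (snorm D + 1)) => /=.
    exact: divr_gt0.
  move=> h; rewrite /ball_ /= sub0r normrN => hd hn0.
  have Hh := Hd (fun i => h *: D i).
  rewrite pline_add sipZr snormZ in Hh.
  have hsd : `|h| * snorm D < d.
    apply: le_lt_trans (_ : `|h| * (snorm D + 1) < d).
      by rewrite ler_wpM2l // lerDl.
    by rewrite -ltr_pdivlMr.
  have {}Hh := Hh hsd.
  rewrite /= /shift /= [h%:A]mulr1.
  set Df := f _ - f _ in Hh *.
  have -> : s - h^-1 *: Df = - (h^-1 * (Df - h * s)).
    by rewrite mulrBr mulrA mulVf // mul1r opprB.
  rewrite normrN normrM normfV ler_pdivrMl ?normr_gt0 //.
  apply: le_trans Hh _.
  have qe : e = e / (snorm D + 1) * (snorm D + 1) by rewrite divfK // gt_eqF.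
  rewrite [X in _ <= _ * X]qe.
  have q0 : 0 <= e / (snorm D + 1) by rewrite divr_ge0 // ltW.
  have := normr_ge0 h; nra.
split; first by apply/cvg_ex; exists s.
exact: cvg_lim.
Qed.

Lemma descent (N : forall i : 'I_p, 'M[R]_(m i, n i) -> R)
  (f : pspace R m n -> R) (G : pspace R m n -> pspace R m n)
  (L0 L1 : 'I_p -> R) (X Y : pspace R m n) :
  (forall i, is_norm (N i)) -> is_gradient f G -> layerwise_L0L1_smooth N G L0 L1 ->
  f Y <= f X + sip (G X) (ssub Y X) +
    \sum_i (L0 i + L1 i * dual_norm (N i) (G X i)) / 2 * N i (Y i - X i) ^+ 2.
Proof.
move=> Nn fG sm.
set D := ssub Y X.
set c := fun i => L0 i + L1 i * dual_norm (N i) (G X i).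
set C := \sum_i c i * N i (D i) ^+ 2.
set s0 := sip (G X) D.
pose q : {poly R} := s0 *: 'X + (C / 2) *: 'X^2.
pose F := fun s => f (pline X D s).
pose phi := F - horner q.
have dphi : forall x, is_derive x (1:R) phi (sip (G (pline X D x)) D - (deriv q).[x]).
  move=> x; apply: is_deriveB; exact: line_derive.
have cphi : {within `[0, 1], continuous phi}.
  by apply: derivable_within_continuous => y _; case: (dphi y).
have [c0 c01 Hmvt] := MVT_segment ler01 (fun x _ => dphi x) cphi.
have c0ge0 : 0 <= c0 by move: c01; rewrite in_itv /= => /andP[].
have term i : ip (G (pline X D c0) i) (D i) - ip (G X i) (D i)
    <= c0 * (c i * N i (D i) ^+ 2).
  rewrite -ipBl -ipNN opprB.
  apply: le_trans (ip_le_dual _ _ (Nn i)) _.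
  rewrite (normN _ (Nn i)).
  have H := sm i X (pline X D c0).
  have E : X i - pline X D c0 i = - (c0 *: D i) by rewrite /pline opprD addrA subrr add0r.
  move: H; rewrite E (normN _ (Nn i)); case: (Nn i) => Nge0 _ NZ _.
  rewrite NZ ger0_norm // => H.
  apply: le_trans (ler_wpM2r (Nge0 _) H) _.
  by rewrite /c expr2 le_eqVlt; apply/orP; left; apply/eqP; ring.
have dle : sip (G (pline X D c0)) D - (deriv q).[c0] <= 0.
  rewrite /q !poly.derivE !hornerE /=.
  have : sip (G (pline X D c0)) D - s0 <= c0 * C.
    rewrite /sip /s0 /sip -sumrB /C mulr_sumr; apply: ler_sum => i _; exact: term.
  lra.
have E : f (pline X D 1) - q.[1] - (f (pline X D 0) - q.[0]) =
   (sip (G (pline X D c0)) D - (deriv q).[c0]) * (1 - 0) := Hmvt.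
have P1 : pline X D 1 = Y.
  apply: functional_extensionality_dep => i.
  by rewrite /pline scale1r /D /ssub addrC subrK.
have P0 : pline X D 0 = X.
  apply: functional_extensionality_dep => i.
  by rewrite /pline scale0r addr0.
have -> : \sum_i (L0 i + L1 i * dual_norm (N i) (G X i)) / 2 * N i (Y i - X i) ^+ 2 = C / 2.
  by rewrite /C mulr_suml; apply: eq_bigr => i _; rewrite /c /D /ssub mulrAC.
move: E; rewrite P1 P0 subr0 mulr1 {1 2}/q !hornerE /= => E.
have : f Y - (s0 + C / 2 * 1 * 1) - (f X - C / 2 * 0 * 0) <= 0.
  rewrite E; exact: dle.
rewrite /s0 /D; lra.
Qed.
End B.

Section C.
Variable R : realType.

Lemma ipBr (a b : nat) (Y Z1 Z2 : 'M[R]_(a,b)) : ip Y (Z1 - Z2) = ip Y Z1 - ip Y Z2.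
Proof.
rewrite !ipE -sumrB; apply: eq_bigr => i _; rewrite -sumrB.
by apply: eq_bigr => j _; rewrite !mxE mulrBr.
Qed.

Lemma block_step (a b : nat) (N : 'M[R]_(a,b) -> R) (l0 l1 : R) (g Xi Yi : 'M[R]_(a,b)) :
  is_norm N -> 0 <= l0 -> 0 <= l1 -> (g != 0 -> 0 < l0 + l1 * dual_norm N g) ->
  N (Yi - Xi) <= gluon_radius N l0 l1 g ->
  (forall Z, N (Z - Xi) <= gluon_radius N l0 l1 g -> ip g Yi <= ip g Z) ->
  ip g (Yi - Xi) + (l0 + l1 * dual_norm N g) / 2 * N (Yi - Xi) ^+ 2
    <= - (dual_norm N g ^+ 2 / (2 * (l0 + l1 * dual_norm N g))).
Proof.
move=> Nn l00 l10 wd Hr Hmin.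
have [Nge0 Neq0 NZ Nadd] := Nn.
have N0 := norm0 Nn.
have dge0 := dual_ge0 g Nn.
set d := dual_norm N g in Hr Hmin wd dge0 *.
set c := l0 + l1 * d in wd *.
have cge0 : 0 <= c by rewrite /c addr_ge0 // mulr_ge0.
have [g0|gn0] := eqVneq g 0.
  move: Hr Hmin; rewrite /gluon_radius g0 eqxx => Hr Hmin.
  have -> : d = 0 by rewrite /d g0 (dual0 Nn).
  rewrite ip0l expr0n /= mul0r oppr0 add0r.
  have -> : N (Yi - Xi) = 0 by apply/le_anti; rewrite Hr Nge0.
  by rewrite expr0n /= mulr0.
have c0 := wd gn0.
move: Hr Hmin; rewrite /gluon_radius (negbTE gn0) -/d -/c => Hr Hmin.
set t := d / c in Hr Hmin *.
have tge0 : 0 <= t by rewrite divr_ge0 // ltW.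
have Hip : ip g (Yi - Xi) <= - (t * d).
  have [d0|dn0] := eqVneq d 0.
    rewrite /t d0 mul0r mul0r oppr0 ipBr subr_le0; apply: Hmin.
    by rewrite subrr N0 /t d0 mul0r.
  have tgt0 : 0 < t by rewrite divr_gt0 // lt_def dn0 dge0.
  have : d <= - ip g (Yi - Xi) / t.
    apply: dual_le_ub => // Z NZ1.
    rewrite ler_pdivlMr // ipBr opprB.
    have := Hmin (Xi - t *: Z).
    rewrite addrAC subrr add0r normN // NZ ger0_norm // ipBr ipZr.
    have : t * N Z <= t by rewrite -{2}(mulr1 t) ler_wpM2l.
    move=> H1 H2; have := H2 H1; lra.
  rewrite ler_pdivlMr //; lra.
have HN2 : N (Yi - Xi) ^+ 2 <= t ^+ 2.
  by rewrite ler_sqr ?nnegrE ?Nge0.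
have : c / 2 * N (Yi - Xi) ^+ 2 <= c / 2 * t ^+ 2.
  by rewrite ler_wpM2l // divr_ge0.
have -> : - (d ^+ 2 / (2 * c)) = - (t * d) + c / 2 * t ^+ 2.
  rewrite /t; field; exact: lt0r_neq0.
lra.
Qed.
End C.

Section D.
Variable R : realType.

Lemma key_ineq (A B e U T : R) : 0 < e -> 0 <= A -> 0 <= B -> e < U ->
  U ^+ 2 <= 2 * T * (A + B * U) -> e ^+ 2 < 2 * T * (A + B * e).
Proof.
move=> e0 A0 B0 eU H.
have U0 : 0 < U by apply: lt_trans eU.
have S0 : 0 < A + B * U.
  have S0 : 0 <= A + B * U by rewrite addr_ge0 // mulr_ge0 // ltW.
  rewrite lt_def S0 andbT; apply/eqP => S00.
  by move: H; rewrite S00 mulr0 => H; nra.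
have key : e ^+ 2 * (A + B * U) < U ^+ 2 * (A + B * e).
  have [A0'|Ap] := eqVneq A 0.
    have Bp : 0 < B by move: S0; rewrite A0' add0r pmulr_lgt0.
    rewrite A0' !add0r.
    have : 0 < B * e * U * (U - e) by rewrite !mulr_gt0 // subr_gt0.
    nra.
  have Ap' : 0 < A by rewrite lt_def Ap A0.
  have : 0 < A * ((U - e) * (U + e)) by rewrite !mulr_gt0 // ?subr_gt0 ?addr_gt0.
  have : 0 <= B * e * U * (U - e) by rewrite !mulr_ge0 // ?subr_ge0 ?ltW.
  nra.
have : e ^+ 2 * (A + B * U) < 2 * T * (A + B * e) * (A + B * U).
  apply: lt_le_trans key _.
  have : 0 <= A + B * e by rewrite addr_ge0 // mulr_ge0 // ltW.
  nra.
by rewrite ltr_pM2r.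
Qed.

Lemma final (A B e D : R) (U T : nat -> R) (K : int) :
  0 < e -> 0 <= A -> 0 <= B ->
  (forall k, U k ^+ 2 <= 2 * T k * (A + B * U k)) ->
  (forall k, \sum_(j < k) T j <= D) ->
  K = Num.ceil (2 * D * A / e ^+ 2 + 2 * D * B / e) -> (1 <= K)%R ->
  exists2 k : nat, (k%:Z < K)%R & U k <= e.
Proof.
move=> e0 A0 B0 HU HT -> K1.
set G := exists2 k : nat, _ & _.
have [//|Hn] := pselect G; exfalso.
have Hk k : (k%:Z < Num.ceil (2 * D * A / e ^+ 2 + 2 * D * B / e))%R -> e < U k.
  move=> kK; rewrite ltNge; apply/negP => Ue; apply: Hn; by exists k.
set x := 2 * D * A / e ^+ 2 + 2 * D * B / e in K1 Hk.
have [Kn EK] : exists Kn : nat, Num.ceil x = Kn.+1%:Z.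
  case E: (Num.ceil x) K1 => [[|k]|k] //; by exists k.
rewrite EK in Hk.
have Hlt : \sum_(j < Kn.+1) e ^+ 2 < \sum_(j < Kn.+1) 2 * T j * (A + B * e).
  apply: ltr_sum.
    by apply/hasP; exists ord0; rewrite ?mem_index_enum.
  move=> j _; apply: key_ineq (HU j) => //; apply: Hk.
  by rewrite ltz_nat ltn_ord.
rewrite sumr_const card_ord -mulr_suml -mulr_sumr in Hlt.
have ABe : 0 <= A + B * e by rewrite addr_ge0 // mulr_ge0 // ltW.
have : e ^+ 2 *+ Kn.+1 < 2 * D * (A + B * e).
  apply: lt_le_trans Hlt _.
  have := HT Kn.+1; nra.
move=> H.
have xc := ceil_ge x; rewrite EK in xc.
have Ex : x = 2 * D * (A + B * e) / e ^+ 2.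
  rewrite /x; field; exact: lt0r_neq0.
have H2 : (Kn.+1)%:R < 2 * D * (A + B * e) / e ^+ 2.
  rewrite ltr_pdivlMr; last exact: exprn_gt0.
  by rewrite mulrC mulr_natr.
move: xc; rewrite Ex -pmulrn; lra.
Qed.
End D.

Section E.
Variable R : realType.

Lemma titu (p : nat) (u g : 'I_p -> R) :
  (forall i, 0 <= g i) -> (forall i, g i = 0 -> u i = 0) ->
  (\sum_i u i) ^+ 2 <= (\sum_i u i ^+ 2 / g i) * (\sum_i g i).
Proof.
move=> g0 gu.
have [C0|Cn0] := eqVneq (\sum_i g i) 0.
  have gi0 i : g i = 0.
    by move/eqP: C0; rewrite psumr_eq0 => [/allP /(_ i (mem_index_enum _)) /eqP|j _] //.
  rewrite big1 ?expr0n ?C0 ?mulr0 // => i _; exact: gu.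
have Cp : 0 < \sum_i g i by rewrite lt_def Cn0 sumr_ge0.
set U := \sum_i u i; set C := \sum_i g i; set l := U / C.
have term i : 2 * l * u i - l ^+ 2 * g i <= u i ^+ 2 / g i.
  have [gi0|gin0] := eqVneq (g i) 0.
    by rewrite gi0 (gu i gi0) !mulr0 expr0n /= mul0r subr0.
  have gip : 0 < g i by rewrite lt_def gin0 g0.
  rewrite -subr_ge0.
  have -> : u i ^+ 2 / g i - (2 * l * u i - l ^+ 2 * g i) = (u i - l * g i) ^+ 2 / g i.
    by field.
  by rewrite divr_ge0 // ?sqr_ge0 // ltW.
have : \sum_i (2 * l * u i - l ^+ 2 * g i) <= \sum_i u i ^+ 2 / g i.
  by apply: ler_sum => i _; exact: term.
rewrite sumrB -!mulr_sumr -/U -/C => H.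
have E : 2 * l * U - l ^+ 2 * C = U ^+ 2 / C.
  by rewrite /l; field.
rewrite E ler_pdivrMr // in H.
Qed.

Lemma le_bigmax_r (p : nat) (L : 'I_p -> R) i : L i <= \big[Num.max/0]_(j < p) L j.
Proof.
rewrite (bigD1 i) //= le_max lexx //.
Qed.

Lemma bigmax_ge0 (p : nat) (L : 'I_p -> R) : 0 <= \big[Num.max/0]_(j < p) L j.
Proof.
elim/big_rec: _ => // i x _ H; rewrite le_max H orbT //.
Qed.
End E.

Theorem theorem3 (R : realType) (p : nat) (m n : 'I_p -> nat)
  (N : forall i : 'I_p, 'M[R]_(m i, n i) -> R)
  (f : pspace R m n -> R) (G : pspace R m n -> pspace R m n)
  (L0 L1 : 'I_p -> R) (eps : R) (X : nat -> pspace R m n) :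
  (forall i, is_norm (N i)) ->
  C1_with_gradient f G ->
  (exists lb : R, forall Y, lb <= f Y) ->
  (forall i, 0 <= L0 i) -> (forall i, 0 <= L1 i) ->
  layerwise_L0L1_smooth N G L0 L1 ->
  0 < eps ->
  (forall k i, G (X k) i != 0 ->
     0 < L0 i + L1 i * dual_norm (N i) (G (X k) i)) ->
  gluon_iterates N G
    (fun k i => gluon_radius (N i) (L0 i) (L1 i) (G (X k) i)) X ->
  let finf := inf (range f) in
  let Delta0 := f (X 0%N) - finf in
  let L1max := \big[Num.max/0]_(i < p) L1 i in
  (* part (1) *)
  (let K := Num.ceil (2 * Delta0 * (\sum_(i < p) L0 i) / eps ^+ 2
                      + 2 * Delta0 * L1max / eps) in
   (1 <= K)%R ->
   exists2 k : nat, (k%:Z < K)%R &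
     \sum_(i < p) dual_norm (N i) (G (X k) i) <= eps)
  /\
  (* part (2) *)
  ((forall i, 0 < L1 i) ->
   let H := (p%:R)^-1 * \sum_(j < p) (L1 j)^-1 in
   let K := Num.ceil (2 * Delta0 * (\sum_(i < p) L0 i / (L1 i) ^+ 2)
                        / (eps ^+ 2 * H ^+ 2)
                      + 2 * Delta0 / (eps * H)) in
   (1 <= K)%R ->
   exists2 k : nat, (k%:Z < K)%R &
     \sum_(i < p) ((L1 i)^-1 / H) * dual_norm (N i) (G (X k) i) <= eps).
Proof.
move=> Nn [fG _] [lb flb] L00 L10 sm e0 wd it finf Delta0 L1max.
set d := fun k i => dual_norm (N i) (G (X k) i).
set c := fun k i => L0 i + L1 i * d k i.
set T := fun k => f (X k) - f (X k.+1).
have dge0 k i : 0 <= d k i := dual_ge0 _ (Nn i).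
have cge0 k i : 0 <= c k i by rewrite /c addr_ge0 // mulr_ge0.
have step k : \sum_i d k i ^+ 2 / c k i <= 2 * T k.
  have H := descent (X k) (X k.+1) Nn fG sm.
  have Hb i := block_step (Nn i) (L00 i) (L10 i) (wd k i) (it k i).1 (it k i).2.
  have : sip (G (X k)) (ssub (X k.+1) (X k)) +
      \sum_i (L0 i + L1 i * dual_norm (N i) (G (X k) i)) / 2 * N i (X k.+1 i - X k i) ^+ 2
      <= \sum_i - (d k i ^+ 2 / (2 * c k i)).
    rewrite /sip -big_split; apply: ler_sum => i _; exact: Hb i.
  have -> : \sum_i - (d k i ^+ 2 / (2 * c k i)) = - ((\sum_i d k i ^+ 2 / c k i) / 2).
    rewrite mulr_suml -sumrN; apply: eq_bigr => i _; rewrite invfM; ring.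
  rewrite /T; lra.
have tele k : \sum_(j < k) T j <= Delta0.
  have -> : \sum_(j < k) T j = f (X 0%N) - f (X k).
    elim: k => [|k IH]; first by rewrite big_ord0 subrr.
    by rewrite big_ord_recr /= IH /T; ring.
  have : finf <= f (X k).
    apply: ge_inf; last by exists (X k).
    by exists lb => _ [Y _ <-]; exact: flb.
  rewrite /Delta0; lra.
have gd k i : c k i = 0 -> d k i = 0.
  move=> c0; have [g0|gn0] := eqVneq (G (X k) i) 0.
    by rewrite /d g0 (dual0 (Nn i)).
  by have := wd k i gn0; rewrite -/(d k i) -/(c k i) c0 ltxx.
have Qge0 k : 0 <= \sum_i d k i ^+ 2 / c k i.
  by apply: sumr_ge0 => i _; rewrite divr_ge0 // sqr_ge0.
split.
  move=> K K1.
  have A0 : 0 <= \sum_i L0 i by apply: sumr_ge0.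
  have B0 : 0 <= L1max by apply: bigmax_ge0.
  apply: (final (A := \sum_i L0 i) (B := L1max) (U := fun k => \sum_i d k i) (T := T)) => //.
  move=> k /=.
  have Ht := titu (cge0 k) (gd k).
  have HC : \sum_i c k i <= \sum_i L0 i + L1max * \sum_i d k i.
    rewrite /c big_split /= lerD2l mulr_sumr; apply: ler_sum => i _.
    by rewrite ler_wpM2r // le_bigmax_r.
  have U0 : 0 <= \sum_i d k i by apply: sumr_ge0.
  have := step k; have := Qge0 k.
  set Q := \sum_i _ ^+ 2 / _ in Ht *.
  set U := \sum_i d k i in Ht HC U0 *.
  set C := \sum_i c k i in Ht HC.
  move=> Q0 QT.
  apply: le_trans Ht _.
  have : Q * C <= Q * (\sum_i L0 i + L1max * U) by rewrite ler_wpM2l.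
  have : 0 <= \sum_i L0 i + L1max * U by rewrite addr_ge0 // mulr_ge0.
  nra.
move=> L1p H K K1.
have K0 : (0%:Z < K)%R by apply: lt_le_trans K1.
case: (posnP p) => [p0|pp].
  exists 0%N => //; rewrite big1 ?ltW // => i _.
  by exfalso; move: (ltn_ord i); rewrite {2}p0.
have L1n0 i : L1 i != 0 by rewrite gt_eqF.
have Hp : 0 < H.
  rewrite /H mulr_gt0 ?invr_gt0 ?ltr0n //.
  apply: (@lt_le_trans _ _ (L1 (Ordinal pp))^-1); first by rewrite invr_gt0.
  rewrite (bigD1 (Ordinal pp)) //= lerDl; apply: sumr_ge0 => i _.
  by rewrite invr_ge0 ltW.
set A := \sum_i L0 i / L1 i ^+ 2.
have A0 : 0 <= A by apply: sumr_ge0 => i _; rewrite divr_ge0 // sqr_ge0.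
have HU : forall k, (H * \sum_i ((L1 i)^-1 / H) * dual_norm (N i) (G (X k) i)) ^+ 2 <=
    2 * T k * (A + 1 * (H * \sum_i ((L1 i)^-1 / H) * dual_norm (N i) (G (X k) i))).
  move=> k.
  have -> : H * \sum_i (L1 i)^-1 / H * dual_norm (N i) (G (X k) i)
      = \sum_i d k i / L1 i.
    rewrite mulr_sumr; apply: eq_bigr => i _; rewrite /d; field.
    by rewrite L1n0 gt_eqF.
  have g0 i : 0 <= c k i / L1 i ^+ 2 by rewrite divr_ge0 // sqr_ge0.
  have gu i : c k i / L1 i ^+ 2 = 0 -> d k i / L1 i = 0.
    move/eqP; rewrite mulf_eq0 invr_eq0 expf_eq0 (negbTE (L1n0 i)) andbF orbF.
    by move/eqP/gd ->; rewrite mul0r.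
  have Ht := titu g0 gu.
  have EQ : \sum_i (d k i / L1 i) ^+ 2 / (c k i / L1 i ^+ 2) = \sum_i d k i ^+ 2 / c k i.
    apply: eq_bigr => i _; rewrite expr_div_n invf_div mulrA divfK //.
    by rewrite expf_neq0.
  have EC : \sum_i c k i / L1 i ^+ 2 = A + \sum_i d k i / L1 i.
    rewrite /A -big_split; apply: eq_bigr => i _ /=; rewrite /c; field.
    exact: L1n0.
  rewrite EQ EC in Ht.
  have U0 : 0 <= \sum_i d k i / L1 i.
    by apply: sumr_ge0 => i _; rewrite divr_ge0 // ltW.
  have := step k; have := Qge0 k.
  set Q := \sum_i _ ^+ 2 / _ in Ht *.
  set U := \sum_i d k i / L1 i in Ht U0 *.
  move=> Q0 QT; rewrite mul1r.
  apply: le_trans Ht _.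
  have : 0 <= A + U by rewrite addr_ge0.
  nra.
have HK : K = Num.ceil (2 * Delta0 * A / (eps * H) ^+ 2 + 2 * Delta0 * 1 / (eps * H)).
  by rewrite mulr1 exprMn.
have [k kK Uk] := final (A := A) (B := 1) (e := eps * H)
   (U := fun k => H * \sum_i ((L1 i)^-1 / H) * dual_norm (N i) (G (X k) i)) (T := T)
   (D := Delta0) (K := K) (mulr_gt0 e0 Hp) A0 ler01 HU tele HK K1.
exists k => //; rewrite -(ler_pM2l Hp); apply: le_trans Uk _; by rewrite mulrC.
Qed.
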